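(* Let $A = (a_{ij}) \in \mathbb{R}^{p \times n}$, let $1 \leq k \leq p$, and let $\widetilde{x} \in \{0,1\}^n$. Let $P \subseteq \{1, \ldots, p\}$ be a subset with $|P| \geq k$ such that $Q_k(A\widetilde{x}) = \min_{i \in P} \sum_{j=1}^n a_{ij}\widetilde{x}_j$. Then for all $x \in \{0,1\}^n$, $$Q_k(Ax) \geq Q_k(A\widetilde{x}) + \sum_{j : \widetilde{x}_j = 1} (x_j - 1)\max_{i \in P} a_{ij} + \sum_{j : \widetilde{x}_j = 0} x_j \min_{i \in P} a_{ij},$$ and this inequality holds with equality for $x = \widetilde{x}$.
   Context: For $y \in \mathbb{R}^p$ and an integer $1 \leq k \leq p$, $Q_k(y)$ denotes the $k$-th largest entry of $y$ (entries counted with multiplicity). *)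

(* Defs.v *)
From HB Require Import structures.
From mathcomp Require Import all_boot all_order all_algebra.
Set Implicit Arguments. Unset Strict Implicit. Unset Printing Implicit Defensive.
Import Order.TTheory GRing.Theory Num.Theory.
Local Open Scope ring_scope.

(* Minimum / maximum of a nonempty list of reals (0 on the empty list,
   which never occurs in the statement since |P| >= k >= 1). *)
Definition smin (R : realDomainType) (s : seq R) : R :=
  if s is x :: s' then foldr Num.min x s' else 0.
Definition smax (R : realDomainType) (s : seq R) : R :=
  if s is x :: s' then foldr Num.max x s' else 0.

(* Q_k(y): the k-th largest entry of y (1-based k, with multiplicity):
   sort the entries in nonincreasing order and take the k-th one. *)
Definition Qk (R : realDomainType) (p : nat) (k : nat) (y : 'I_p -> R) : R :=
  nth 0 (sort (fun a b : R => b <= a) [seq y i | i <- enum 'I_p]) k.-1.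

Definition Aprod (R : realDomainType) (p n : nat) (A : 'M[R]_(p, n))
  (x : 'I_n -> bool) : 'I_p -> R :=
  fun i => \sum_(j < n) A i j * (x j)%:R.

(* Main.v *)
Require Import Defs.
From mathcomp Require Import all_boot all_order all_algebra.
From HB Require Import structures.
From mathcomp Require Import zify ring lra.
Import Order.TTheory GRing.Theory Num.Theory.
Local Open Scope ring_scope.
Lemma cnt (T : finType) (a : pred T) : count a (enum T) = #|a|.
Proof. by rewrite cardE -size_filter /enum_mem filter_predT. Qed.

Lemma Qk_ge (R : realDomainType) (p k : nat) (y : 'I_p -> R) (c : R) (P : {set 'I_p}) :
  (1 <= k)%N -> (k <= #|P|)%N -> (forall i, i \in P -> c <= y i) -> c <= Qk k y.
Proof.
case: k => [//|k] _ kP Hc; rewrite /Qk /=.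
set s := sort _ _.
have ss : sorted (fun a b : R => b <= a) s.
  by apply: sort_sorted => a b; apply: le_total.
have sz : size s = p by rewrite size_sort size_map -cardT card_ord.
have cs : (k.+1 <= count (fun v => (c <= v)%R) s)%N.
  have ps : perm_eq s [seq y i | i <- enum 'I_p] by rewrite /s perm_sort.
  rewrite (permP ps) count_map cnt.
  apply: (leq_trans kP); apply: subset_leq_card; apply/subsetP => i iP.
  by rewrite inE /= Hc.
rewrite leNgt; apply/negP => lt.
have : (count (fun v => (c <= v)%R) s <= k)%N.
  rewrite -(cat_take_drop k s) count_cat.
  have -> : count (fun v => (c <= v)%R) (drop k s) = 0%N.
    apply/eqP; rewrite -leqn0 leqNgt -has_count; apply/hasPn => v.
    move/(nthP (0:R)) => [j]; rewrite size_drop nth_drop => jl <-.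
    rewrite -ltNge; apply: le_lt_trans lt.
    have tr : transitive (fun a b : R => b <= a).
      by move=> a b d /= h1 h2; apply: le_trans h2 h1.
    have jk : (k + j < size s)%N by rewrite -ltn_subRL.
    have kk : (k < size s)%N by apply: leq_ltn_trans jk; apply: leq_addr.
    have H := sorted_leq_nth tr (fun a => lexx a) (0:R) ss. exact: (H _ _ kk jk (leq_addr j k)).
  have := count_size (fun v => (c <= v)%R) (take k s); rewrite size_take; rewrite addn0; case: ltnP => h // h2; exact: leq_trans h2 h.
lia.
Qed.

Lemma smin_le (R : realDomainType) (s : seq R) x : x \in s -> smin s <= x.
Proof.
case: s => [//|a s] /=; elim: s a => [|b s IH] a; first by rewrite inE => /eqP ->.
rewrite !inE /= => /orP [/eqP <-|/orP [/eqP <-|xs]].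
- rewrite ge_min; apply/orP; right; apply: IH; by rewrite inE eqxx.
- by rewrite ge_min lexx.
- rewrite ge_min; apply/orP; right; apply: IH; by rewrite inE xs orbT.
Qed.

Lemma smax_ge (R : realDomainType) (s : seq R) x : x \in s -> x <= smax s.
Proof.
case: s => [//|a s] /=; elim: s a => [|b s IH] a; first by rewrite inE => /eqP ->.
rewrite !inE /= => /orP [/eqP <-|/orP [/eqP <-|xs]].
- rewrite le_max; apply/orP; right; apply: IH; by rewrite inE eqxx.
- by rewrite le_max lexx.
- rewrite le_max; apply/orP; right; apply: IH; by rewrite inE xs orbT.
Qed.

Theorem theorem8 (R : realFieldType) (p n : nat) (A : 'M[R]_(p, n)) (k : nat)
  (xt : 'I_n -> bool) (P : {set 'I_p}) :
  (1 <= k)%N -> (k <= p)%N -> (k <= #|P|)%N ->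
  Qk k (Aprod A xt) = smin [seq \sum_(j < n) A i j * (xt j)%:R | i <- enum P] ->
  (forall x : 'I_n -> bool,
     Qk k (Aprod A xt)
       + \sum_(j < n | xt j) ((x j)%:R - 1) * smax [seq A i j | i <- enum P]
       + \sum_(j < n | ~~ xt j) (x j)%:R * smin [seq A i j | i <- enum P]
     <= Qk k (Aprod A x))
  /\
  Qk k (Aprod A xt)
    + \sum_(j < n | xt j) ((xt j)%:R - 1) * smax [seq A i j | i <- enum P]
    + \sum_(j < n | ~~ xt j) (xt j)%:R * smin [seq A i j | i <- enum P]
  = Qk k (Aprod A xt).
Proof.
move=> k1 kp kP HQ; split; last first.
  rewrite [X in _ + X + _]big1 ?[X in _ + X]big1 ?addr0 //.
  - by move=> j /negbTE ->; rewrite mul0r.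
  - by move=> j ->; rewrite subrr mul0r.
move=> x; apply: (@Qk_ge R p k (Aprod A x) _ P k1 kP) => i iP.
have iP' : i \in enum P by rewrite mem_enum.
have HQi : Qk k (Aprod A xt) <= Aprod A xt i.
  by rewrite HQ; apply: smin_le; apply/mapP; exists i.
apply: le_trans (lerD (lerD HQi (lexx _)) (lexx _)) _.
rewrite /Aprod (bigID xt) [X in _ <= X](bigID xt) /= -addrA addrACA.
rewrite -!big_split /=; apply: lerD; apply: ler_sum => j xj.
  have Hm : A i j <= smax [seq A i j | i <- enum P].
    by apply: smax_ge; apply/mapP; exists i.
  by rewrite xj; case: (x j) => /=; lra.
have Hm : smin [seq A i j | i <- enum P] <= A i j.
  by apply: smin_le; apply/mapP; exists i.
by rewrite (negbTE xj); case: (x j) => /=; lra.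
Qed.
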